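(* Let $G$ and $K$ be finite sets, let $\beta:G\rightarrow K$ be a surjective function, let $U\subseteq\Lambda^G$ be such that $\Xi_\beta(U)=\Lambda^K$, and let $f^*:K\rightarrow\mathbb R^+$. Then for every $p\in U$ and every $\epsilon>0$ there exists $\delta'>0$ such that for every $\delta\ge 0$ with $\delta<\delta'$ and every function $f:G\rightarrow\mathbb R^+$ whose thematic mean divergence with respect to $f^*$ on $U$ under $\beta$ is bounded by $\delta$, we have \[d(\Xi_\beta(\mathcal S_f p),\,\mathcal S_{f^*}(\Xi_\beta p))<\epsilon.\]
   Context: $\mathbb R^+$ denotes the positive reals. For a set $X$, $\Lambda^X$ is the set of functions $p:X\rightarrow[0,1]$ with $\sum_{x\in X}p(x)=1$. For $\beta:G\rightarrow K$ and $k\in K$, $\langle k\rangle_\beta=\{x\in G\mid \beta(x)=k\}$, and $\Xi_\beta:\Lambda^G\rightarrow\Lambda^K$ is $(\Xi_\beta p)(k)=\sum_{x\in\langle k\rangle_\beta}p(x)$; $\Xi_\beta(U)=\{\Xi_\beta p\mid p\in U\}$. For a finite set $X$ and $f:X\rightarrow\mathbb R^+$, $\mathcal E_f(p)=\sum_{x\in X}f(x)p(x)$ (defined also for the zero function $p$), and the selection operator $\mathcal S_f:\Lambda^X\rightarrow\Lambda^X$ is $(\mathcal S_fp)(x)=f(x)p(x)/\mathcal E_f(p)$. The theme conditional operator gives, for $p\in\Lambda^G$ and $k\in K$, the function $\mathcal C_\beta(p,k):G\rightarrow[0,1]$ with $(\mathcal C_\beta(p,k))(x)=p(x)/(\Xi_\beta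 p)(k)$ if $\beta(x)=k$ and $(\Xi_\beta p)(k)>0$, and $(\mathcal C_\beta(p,k))(x)=0$ otherwise. For $\delta\ge0$, the thematic mean divergence of $f:G\rightarrow\mathbb R^+$ with respect to $f^*:K\rightarrow\mathbb R^+$ on $U$ under $\beta$ is bounded by $\delta$ if for all $p\in U$ and all $k\in K$, $|\mathcal E_f(\mathcal C_\beta(p,k))-f^*(k)|\le\delta$. For real-valued functions $g,h$ on a finite set $X$, $d(g,h)=\sum_{x\in X}|g(x)-h(x)|$. *)

(* Defs.v *)
From mathcomp Require Import all_boot all_order all_algebra.
From mathcomp Require Import reals.
Set Implicit Arguments. Unset Strict Implicit. Unset Printing Implicit Defensive.
Import Order.TTheory GRing.Theory Num.Theory.
Local Open Scope ring_scope.

Section Defs.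
Variable R : realType.

Definition Lambda (X : finType) (p : X -> R) : Prop :=
  (forall x, 0 <= p x <= 1) /\ \sum_(x : X) p x = 1.

Definition Xi (G K : finType) (beta : G -> K) (p : G -> R) : K -> R :=
  fun k => \sum_(x : G | beta x == k) p x.

Definition Ef (X : finType) (f : X -> R) (p : X -> R) : R :=
  \sum_(x : X) f x * p x.

Definition Sel (X : finType) (f : X -> R) (p : X -> R) : X -> R :=
  fun x => f x * p x / Ef f p.

Definition Cond (G K : finType) (beta : G -> K) (p : G -> R) (k : K) : G -> R :=
  fun x => if (beta x == k) && (0 < Xi beta p k) then p x / Xi beta p k else 0.

Definition tmd_bounded (G K : finType) (beta : G -> K) (f : G -> R)
  (fstar : K -> R) (U : (G -> R) -> Prop) (delta : R) : Prop :=
  forall p, U p -> forall k : K, `|Ef f (Cond beta p k) - fstar k| <= delta.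

Definition dist (X : finType) (g h : X -> R) : R := \sum_(x : X) `|g x - h x|.

End Defs.

(* Main.v *)
Require Import Defs.
From mathcomp Require Import all_boot all_order all_algebra.
From mathcomp Require Import reals.
From mathcomp Require Import ring lra.
Import Order.TTheory GRing.Theory Num.Theory.
Local Open Scope ring_scope.

Lemma fiber_sum (R : realType) (G K : finType) (beta : G -> K) (F : G -> R) :
  \sum_(k : K) \sum_(x : G | beta x == k) F x = \sum_(x : G) F x.
Proof.
rewrite (exchange_big_dep xpredT) //=.
apply: eq_bigr => x _.
by rewrite (big_pred1 (beta x)) // => k /=; rewrite eq_sym.
Qed.

Theorem theorem2 (R : realType) (G K : finType) (beta : G -> K)
  (U : (G -> R) -> Prop) (fstar : K -> R) :
  (forall k : K, exists x : G, beta x = k) ->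
  (forall p, U p -> Lambda p) ->
  (forall q : K -> R, Lambda q <-> exists2 p, U p & Xi beta p = q) ->
  (forall k, 0 < fstar k) ->
  forall p, U p -> forall eps : R, 0 < eps ->
  exists2 delta' : R, 0 < delta' &
    forall delta : R, 0 <= delta -> delta < delta' ->
    forall f : G -> R, (forall x, 0 < f x) ->
      tmd_bounded beta f fstar U delta ->
      dist (Xi beta (Sel f p)) (Sel fstar (Xi beta p)) < eps.
Proof.
move=> _ HUL _ Hfs p Up eps eps0.
have [Hp01 Hp1] := HUL p Up.
have p0 : forall x, 0 <= p x by move=> x; case/andP: (Hp01 x).
have q0 : forall k, 0 <= Xi beta p k by move=> k; apply: sumr_ge0.
have q1 : \sum_k Xi beta p k = 1 by rewrite -Hp1 /Xi fiber_sum.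
have b0 : forall k, 0 <= fstar k * Xi beta p k.
  by move=> k; apply: mulr_ge0; [exact: ltW|].
have m0 : 0 < Ef fstar (Xi beta p).
  rewrite lt_def; apply/andP; split; last by apply: sumr_ge0 => k _.
  apply/negP => /eqP /psumr_eq0P H.
  have Hq : forall k, Xi beta p k = 0.
    move=> k; have := H (fun i _ => b0 i) k isT; move/eqP; rewrite mulf_eq0 => /orP [/eqP h|/eqP //].
    by have := Hfs k; rewrite h ltxx.
  by move: q1; rewrite big1 // => /eqP; rewrite eq_sym oner_eq0.
set m := Ef fstar (Xi beta p) in m0 *.
exists (Num.min (m / 2)%R (eps * m / 4)%R).
  rewrite lt_min; apply/andP; split; apply: divr_gt0 => //; exact: mulr_gt0.
move=> delta d0 dlt f fpos Htmd.
move: dlt; rewrite lt_min => /andP [dm de].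
pose a k := \sum_(x | beta x == k) f x * p x.
pose b k := fstar k * Xi beta p k.
have Ea : Ef f p = \sum_k a k by rewrite /Ef /a fiber_sum.
have mb : m = \sum_k b k by [].
have hab : forall k, `|a k - b k| <= delta * Xi beta p k.
  move=> k; move: (q0 k); rewrite le_eqVlt => /orP [/eqP qk|qk].
    have ak : a k = 0.
      apply: big1 => x /eqP bx.
      move/esym: qk => /eqP; rewrite /Xi psumr_eq0 // => /allP Hx.
      have := Hx x (mem_index_enum x); rewrite bx eqxx /= => /eqP ->.
      by rewrite mulr0.
    by rewrite /b ak -qk mulr0 subr0 normr0 mulr0.
  have := Htmd p Up k.
  have -> : Ef f (Cond beta p k) = a k / Xi beta p k.
    rewrite /Ef /Cond /a mulr_suml (bigID (fun x => beta x == k)) /=.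
    rewrite [X in _ + X]big1; last by move=> x /negbTE ->; rewrite mulr0.
    rewrite addr0; apply: eq_bigr => x ->; rewrite qk /=; by rewrite mulrA.
  move=> H.
  have -> : a k - b k = (a k / Xi beta p k - fstar k) * Xi beta p k.
    by rewrite /b; field; rewrite gt_eqF.
  by rewrite normrM (gtr0_norm qk) ler_wpM2r // ltW.
have Sb : \sum_k `|a k - b k| <= delta.
  apply: le_trans (ler_sum _ (fun k _ => hab k)) _.
  by rewrite -mulr_sumr q1 mulr1.
have mE : `|m - Ef f p| <= delta.
  rewrite mb Ea -sumrB; apply: le_trans (ler_norm_sum _ _ _) _.
  by under eq_bigr do rewrite distrC.
have Epos : m / 2 < Ef f p.
  have := ler_norm (m - Ef f p); lra.
have E0 : 0 < Ef f p by apply: lt_trans Epos; exact: divr_gt0.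
have Xa : forall k, Xi beta (Sel f p) k = a k / Ef f p.
  by move=> k; rewrite /Xi /Sel /a mulr_suml.
rewrite /dist.
have step : forall k, `|Xi beta (Sel f p) k - Sel fstar (Xi beta p) k|
   <= `|a k - b k| / Ef f p + b k * (`|m - Ef f p| / (Ef f p * m)).
  move=> k; rewrite Xa /Sel -/(b k) -/m.
  rewrite (_ : a k / Ef f p - b k / m =
     (a k - b k) / Ef f p + b k * ((m - Ef f p) / (Ef f p * m))); last first.
    by field; apply/andP; split; rewrite gt_eqF.
  apply: le_trans (ler_normD _ _) _.
  apply: lerD; first by rewrite normrM normfV (gtr0_norm E0).
  rewrite [`|b k * _|]normrM (ger0_norm (b0 k)) [`|_ / (_ * _)|]normrM normfV.
  by rewrite (gtr0_norm (mulr_gt0 E0 m0)).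
apply: le_lt_trans (ler_sum _ (fun k _ => step k)) _.
rewrite big_split /= -mulr_suml -mulr_suml -mb.
rewrite (_ : m * (`|m - Ef f p| / (Ef f p * m)) = `|m - Ef f p| / Ef f p); last first.
  by field; apply/andP; split; rewrite gt_eqF.
rewrite -mulrDl ltr_pdivrMr //.
have : eps * m / 2 < eps * Ef f p.
  by rewrite -mulrA ltr_pM2l.
lra.
Qed.
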